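(* Let $L>0$, $\theta>0$, and for each $t$ let $\widehat\varphi_t$ be convex with $C\subset\operatorname{dom}\partial\widehat\varphi_t$ and $\partial\widehat\varphi_t$ $L$-Lipschitz on $C$ (i.e. $\|g-h\|\le L\|x-y\|$ for $g\in\partial\widehat\varphi_t(x)$, $h\in\partial\widehat\varphi_t(y)$, $x,y\in C$). At each round $t$, let expert points $\boldsymbol x_t=(x_t(0),\dots,x_t(n))\in C^{n+1}$ be given, and let $w_t,\widetilde w_t$ be generated by ONES (with $\widetilde w_1$ having positive entries) using $$\ell_t(i)=\langle g_t,x_t(i)\rangle,\ g_t\in\partial\varphi_t(\overline x_t),\ \overline x_t=\textstyle\sum_i w_t(i)x_t(i);\qquad \widehat\ell_t(i)=\langle \widehat g_t,x_t(i)\rangle,\ \widehat g_t\in\partial\widehat\varphi_t(\widetilde{\overline x}_t),\ \widetilde{\overline x}_t=\textstyle\sum_i\widetilde w_t(i)x_t(i).$$ Then for all $T\ge1$ and $w\in\triangle^n$, $$\sum_{t=1}^T\langle\ell_t,w_t-w\rangle\le\frac1\theta\sum_iw(i)\ln\frac{w(i)}{\widetilde w_1(i)}+\theta\rho^2\sum_{t=1}^T\Big(\sup_{x\in C,\,g\in\partial\varphi_t(x),\,\widehat g\in\partial\widehat\varphi_t(x)}\|g-\widehat g\|^2+\mathbf 1\{\theta>\tfrac{1}{\sqrt2\rho^2L}\}\rho^2L^2\|w_t-\widetilde w_t\|_1^2\Big).$$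
   Context: $H$ is a real Hilbert space, $C\subset H$ nonempty closed convex with diameter $\rho=\sup_{x,y\in C}\|x-y\|<\infty$, and (as used by the paper) $\|x\|\le\rho$ for all $x\in C$. Losses $\varphi_t$ are convex with $C\subset\operatorname{dom}\partial\varphi_t$. ONES: $\widetilde w_{t+1}=\mathscr N(\widetilde w_t\circ e^{-\theta\ell_t})$, $w_{t}=\mathscr N(\widetilde w_{t}\circ e^{-\theta\widehat\ell_{t}})$, where $\triangle^n=\{w\in\mathbb R^{n+1}_+:\|w\|_1=1\}$, $\circ$ is the Hadamard product, $\mathscr N(u)=u/\|u\|_1$; $\mathbf 1\{\cdot\}$ is the zero-one indicator. *)

(* Defs.v *)
From HB Require Import structures.
From mathcomp Require Import all_boot all_order all_algebra.
From mathcomp Require Import all_classical all_reals all_analysis.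
Set Implicit Arguments. Unset Strict Implicit. Unset Printing Implicit Defensive.
Import Order.TTheory GRing.Theory Num.Theory.
Import numFieldNormedType.Exports.
Local Open Scope classical_set_scope.
Local Open Scope ring_scope.

Definition is_inner_product (R : realType) (H : completeNormedModType R)
  (inner : H -> H -> R) : Prop :=
  [/\ (forall x y, inner x y = inner y x),
      (forall a x y z, inner (a *: x + y) z = a * inner x z + inner y z)
    & (forall x, inner x x = `|x| ^+ 2)].

(* proper convex function H -> ]-oo,+oo] *)
Definition convex_fun (R : realType) (H : completeNormedModType R)
  (f : H -> \bar R) : Prop :=
  (forall x, f x != -oo%E) /\
  forall (x y : H) (l : R), 0 < l < 1 ->
    (f (l *: x + (1 - l) *: y)%R <= l%:E * f x + (1 - l)%:E * f y)%E.

Definition subgrad (R : realType) (H : completeNormedModType R)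
  (inner : H -> H -> R) (f : H -> \bar R) (x g : H) : Prop :=
  f x \is a fin_num /\ forall y, (f x + (inner g (y - x))%:E <= f y)%E.

Definition simplex (R : realType) (n : nat) (w : 'I_n.+1 -> R) : Prop :=
  (forall i, 0 <= w i) /\ \sum_i w i = 1.

Definition ones_update (R : realType) (n : nat) (theta : R)
  (u l : 'I_n.+1 -> R) (i : 'I_n.+1) : R :=
  u i * expR (- (theta * l i)) / \sum_j u j * expR (- (theta * l j)).

Definition subgrad_gap (R : realType) (H : completeNormedModType R)
  (inner : H -> H -> R) (C : set H) (f fh : H -> \bar R) : \bar R :=
  ereal_sup [set r | exists x g gh, [/\ C x, subgrad inner f x g,
     subgrad inner fh x gh & r = (`|g - gh| ^+ 2)%:E]].

(* Main.v *)
Require Import Defs.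
Set Warnings "-notation-overridden,-deprecated".
From HB Require Import structures.
From mathcomp Require Import all_boot all_order all_algebra.
From mathcomp Require Import all_classical all_reals all_analysis.
From mathcomp Require Import ring lra.
Import Order.TTheory GRing.Theory Num.Theory.
Import numFieldNormedType.Exports.
Local Open Scope classical_set_scope.
Local Open Scope ring_scope.
Lemma conv_comb (R : realType) (H : completeNormedModType R) (C : set H) (m : nat)
  (w : 'I_m.+1 -> R) (y : 'I_m.+1 -> H) : convex_set C -> (forall i, 0 <= w i) ->
  \sum_i w i = 1 -> (forall i, C (y i)) -> C (\sum_i w i *: y i).
Proof.
move=> cC; elim: m w y => [|m IH] w y w0 w1 yC.
  by rewrite big_ord1; move: w1; rewrite big_ord1 => ->; rewrite scale1r.
rewrite big_ord_recl in w1; rewrite big_ord_recl.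
have [e1|ne1] := eqVneq (w ord0) 1.
  have rest0 : forall i : 'I_m.+1, w (lift ord0 i) = 0.
    move=> i; have : \sum_(i < m.+1) w (lift ord0 i) = 0.
      by apply: (@addrI _ (w ord0)); rewrite addr0 w1 e1.
    by move/eqP; rewrite psumr_eq0 // => /allP/(_ i (mem_index_enum _)) /implyP /(_ isT) /eqP.
  rewrite e1 scale1r big1 ?addr0 // => i _; by rewrite rest0 scale0r.
have s0 : 0 < 1 - w ord0.
  rewrite subr_gt0 lt_neqAle ne1 /= -w1 lerDl sumr_ge0 //.
set s := 1 - w ord0.
have -> : \sum_(i < m.+1) w (lift ord0 i) *: y (lift ord0 i) =
   s *: \sum_(i < m.+1) (w (lift ord0 i) / s) *: y (lift ord0 i).
  rewrite scaler_sumr; apply: eq_bigr => i _; rewrite scalerA mulrCA mulfV ?mulr1 //.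
  by rewrite gt_eqF.
have yC' := IH (fun i => w (lift ord0 i) / s) (fun i => y (lift ord0 i)).
have : C (\sum_(i < m.+1) (w (lift ord0 i) / s) *: y (lift ord0 i)).
  apply: yC' => //.
  - by move=> i; rewrite divr_ge0 // ltW.
  - rewrite -mulr_suml (_ : \sum_(i < m.+1) w (lift ord0 i) = s) ?divff ?gt_eqF //.
    by rewrite /s -w1 addrAC subrr add0r.
move=> Cz.
have w01 : 0 <= w ord0 <= 1 by rewrite w0 /= -subr_ge0 ltW.
case/andP: w01 => a0 a1.
have := cC (y ord0) _ (Itv01 a0 a1) (mem_set (yC ord0)) (mem_set Cz).
by rewrite inE.
Qed.

Lemma expR_ge2 {R : realType} (x : R) : 0 <= x -> 1 + x + x ^+ 2 / 2 <= expR x.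
Proof.
move=> x0; rewrite /expR.
have nd : nondecreasing_seq (series (exp_coeff x)).
  rewrite seriesEnat; apply: nondecreasing_series => n _ _; exact: exp_coeff_ge0.
have := nondecreasing_cvgn_le nd (is_cvg_series_exp_coeff x) 3.
apply: le_trans; rewrite seriesEnat /= !big_nat_recr //= big_nil /exp_coeff /=.
by rewrite add0r expr0 expr1 divr1 divr1 /= le_refl.
Qed.

Lemma expRN_le {R : realType} (y : R) : 0 <= y -> expR (- y) <= 1 - y + y ^+ 2 / 2.
Proof.
move=> y0; rewrite expRN.
have h := expR_ge2 y y0.
have p1 : 0 < 1 + y + y ^+ 2 / 2 by rewrite -addrA ltr_wpDr // addr_ge0 // divr_ge0 // exprn_ge0.
have p2 : 0 < 1 - y + y ^+ 2 / 2.
  have -> : 1 - y + y ^+ 2 / 2 = (y - 1) ^+ 2 / 2 + 1 / 2 by rewrite sqrrB; field.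
  by rewrite ltr_wpDl ?divr_ge0 ?sqr_ge0.
apply: (@le_trans _ _ (1 + y + y ^+ 2 / 2)^-1).
  by rewrite lef_pV2 ?posrE // (lt_le_trans p1 h).
rewrite -[X in X <= _]mulr1 ler_pdivrMl //.
rewrite -subr_ge0.
have -> : (1 + y + y ^+ 2 / 2) * (1 - y + y ^+ 2 / 2) - 1 = y ^+ 4 / 4 by field.
by rewrite divr_ge0 // exprn_ge0.
Qed.

Lemma psi_bound {R : realType} (n : nat) (p d : 'I_n.+1 -> R) (th r : R) :
  (forall i, 0 <= p i) -> \sum_i p i = 1 -> 0 <= th ->
  (forall i j, d i - d j <= r) ->
  th * (\sum_i d i * p i) + ln (\sum_i p i * expR (- (th * d i))) <= th ^+ 2 * r ^+ 2 / 2.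
Proof.
move=> p0 p1 th0 dr.
have [j _ hj] := @arg_minP _ R 'I_n.+1 ord0 xpredT d isT.
set c := d j.
have dc0 i : 0 <= d i - c by rewrite subr_ge0 hj.
have dcr i : d i - c <= r by exact: dr.
pose y i := th * (d i - c).
have y0 i : 0 <= y i by rewrite mulr_ge0.
have yr i : y i <= th * r by rewrite ler_wpM2l.
set S' := \sum_i p i * expR (- y i).
have S'0 : 0 < S'.
  apply: (@lt_le_trans _ _ (expR (- (th * r)))); first exact: expR_gt0.
  rewrite -[X in X <= _]mul1r -p1 mulr_suml; apply: ler_sum => i _.
  by rewrite ler_wpM2l // ler_expR lerN2.
have eS : \sum_i p i * expR (- (th * d i)) = expR (- (th * c)) * S'.
  rewrite mulr_sumr; apply: eq_bigr => i _; rewrite mulrCA -expRD /y; congr (_ * expR _); ring.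
have sum1 a : a = \sum_i p i * a by rewrite -mulr_suml p1 mul1r.
rewrite eS lnM ?posrE ?expR_gt0 // expRK.
have lnS : ln S' <= S' - 1.
  have := @le_ln1Dx _ (S' - 1). rewrite (_ : 1 + (S' - 1) = S'); last by ring. apply. lra.
have ed : th * (\sum_i d i * p i) = th * c + \sum_i p i * y i.
  rewrite -[th * c]mulr1 -p1 !mulr_sumr -big_split; apply: eq_bigr => i _; rewrite /y /=; ring.
rewrite ed.
have S'1 : S' - 1 <= \sum_i p i * (- y i + y i ^+ 2 / 2).
  rewrite /S' [X in _ - X](sum1 1) -sumrB; apply: ler_sum => i _.
  rewrite -mulrBr ler_wpM2l //.
  have := expRN_le (y i) (y0 i); lra.
have yb : \sum_i p i * y i + \sum_i p i * (- y i + y i ^+ 2 / 2) <= th ^+ 2 * r ^+ 2 / 2.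
  rewrite -big_split /=.
  rewrite [X in _ <= X](sum1 (th ^+ 2 * r ^+ 2 / 2)); apply: ler_sum => i _.
  rewrite -mulrDr ler_wpM2l // addrA addrN add0r ler_wpM2r // -exprMn.
  by rewrite lerXn2r // ?nnegrE ?y0 // ?(le_trans (y0 i)).
apply: le_trans yb.
have := lerD lnS S'1. lra.
Qed.

Lemma pt1 {R : realType} (p q : R) : 0 < p -> 0 < q ->
  p * ln (q / p) <= 2 * (Num.sqrt p * Num.sqrt q - p).
Proof.
move=> p0 q0.
have a0 : 0 < Num.sqrt p by rewrite sqrtr_gt0.
have b0 : 0 < Num.sqrt q by rewrite sqrtr_gt0.
have e : q / p = (Num.sqrt q / Num.sqrt p) ^+ 2.
  by rewrite expr_div_n !sqr_sqrtr ?ltW.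
have s0 : 0 < Num.sqrt q / Num.sqrt p by rewrite divr_gt0.
rewrite e lnXn // mulr2n.
have h := @le_ln1Dx _ (Num.sqrt q / Num.sqrt p - 1).
rewrite (_ : 1 + (Num.sqrt q / Num.sqrt p - 1) = Num.sqrt q / Num.sqrt p) in h; last by ring.
have {}h := h ltac:(lra).
have -> : 2 * (Num.sqrt p * Num.sqrt q - p) = p * (2 * (Num.sqrt q / Num.sqrt p - 1)).
  set a := Num.sqrt p; set b := Num.sqrt q.
  have pa : p = a ^+ 2 by rewrite /a sqr_sqrtr // ltW.
  rewrite [in RHS]pa [in LHS]pa; field; exact: lt0r_neq0 a0.
rewrite ler_wpM2l; [lra | exact: ltW | lra].
Qed.

Lemma pt2 {R : realType} (p q al : R) : 0 <= p -> 0 <= q -> 0 < al ->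
  `|p - q| <= al / 2 * (Num.sqrt p - Num.sqrt q) ^+ 2 + (Num.sqrt p + Num.sqrt q) ^+ 2 / (2 * al).
Proof.
move=> p0 q0 al0.
have -> : p - q = (Num.sqrt p - Num.sqrt q) * (Num.sqrt p + Num.sqrt q).
  by rewrite -subr_sqr !sqr_sqrtr.
set u := Num.sqrt p - Num.sqrt q; set v := Num.sqrt p + Num.sqrt q.
have v0 : 0 <= v by rewrite addr_ge0 // sqrtr_ge0.
rewrite normrM (ger0_norm v0) -[u ^+ 2](real_normK (num_real u)).
set U := `|u|.
rewrite -subr_ge0.
have -> : al / 2 * U ^+ 2 + v ^+ 2 / (2 * al) - U * v = (al * U - v) ^+ 2 / (2 * al).
  field; exact: lt0r_neq0 al0.
by rewrite divr_ge0 ?sqr_ge0 // mulr_ge0 // ltW.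
Qed.

Lemma kl_bound {R : realType} (n : nat) (p q : 'I_n.+1 -> R) :
  (forall i, 0 < p i) -> (forall i, 0 < q i) -> \sum_i p i = 1 -> \sum_i q i = 1 ->
  \sum_i p i * ln (q i / p i) <= - (\sum_i `|p i - q i|) ^+ 2 / 4.
Proof.
move=> p0 q0 p1 q1.
set X := \sum_i `|p i - q i|.
set BC := \sum_i Num.sqrt (p i) * Num.sqrt (q i).
have h1 : \sum_i p i * ln (q i / p i) <= 2 * (BC - 1).
  rewrite [X in _ - X](_ : 1 = \sum_i p i) // /BC -sumrB mulr_sumr; apply: ler_sum => i _; exact: pt1.
have sa : \sum_i (Num.sqrt (p i) - Num.sqrt (q i)) ^+ 2 = 2 - 2 * BC.
  rewrite (eq_bigr (fun i => p i + q i - 2 * (Num.sqrt (p i) * Num.sqrt (q i)))); last first.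
    by move=> i _; rewrite sqrrB !sqr_sqrtr ?ltW // mulr2n mulrDl mul1r; ring.
  by rewrite sumrB big_split /= p1 q1 /BC mulr_sumr.
have sb : \sum_i (Num.sqrt (p i) + Num.sqrt (q i)) ^+ 2 = 2 + 2 * BC.
  rewrite (eq_bigr (fun i => p i + q i + 2 * (Num.sqrt (p i) * Num.sqrt (q i)))); last first.
    by move=> i _; rewrite sqrrD !sqr_sqrtr ?ltW // mulr2n mulrDl mul1r; ring.
  by rewrite big_split big_split /= p1 q1 /BC mulr_sumr.
have BC1 : BC <= 1.
  have : 0 <= \sum_i (Num.sqrt (p i) - Num.sqrt (q i)) ^+ 2 by apply: sumr_ge0 => i _; exact: sqr_ge0.
  rewrite sa; lra.
have X0 : 0 <= X by apply: sumr_ge0.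
suff : X ^+ 2 <= 8 * (1 - BC) by lra.
have [->|Xn0] := eqVneq X 0; first by rewrite expr0n /= mulr_ge0 // subr_ge0.
have Xp : 0 < X by rewrite lt_neqAle eq_sym Xn0.
have al0 : 0 < 4 / X by rewrite divr_gt0.
have h2 : X <= 4 / X / 2 * (2 - 2 * BC) + (2 + 2 * BC) / (2 * (4 / X)).
  rewrite -sa -sb mulr_sumr mulr_suml -big_split; apply: ler_sum => i _.
  by apply: pt2 => //; apply: ltW.
have h3 : X <= 4 * (1 - BC) / X + X / 2.
  apply: (le_trans h2); rewrite -subr_ge0.
  have -> : 4 * (1 - BC) / X + X / 2 - (4 / X / 2 * (2 - 2 * BC) + (2 + 2 * BC) / (2 * (4 / X))) = X * (1 - BC) / 4.
    field; exact: lt0r_neq0 Xp.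
  by rewrite divr_ge0 // mulr_ge0 // subr_ge0.
have : X / 2 <= 4 * (1 - BC) / X by lra.
rewrite ler_pdivlMr // => h4.
have : X * X / 2 <= 4 * (1 - BC) by rewrite mulrC mulrA; rewrite mulrC in h4; lra.
rewrite expr2; lra.
Qed.

Lemma norm_comb0 {R : realType} {H : normedModType R} (n : nat) (c : 'I_n.+1 -> R)
  (x : 'I_n.+1 -> H) (rho : R) :
  \sum_i c i = 0 -> (forall i j, `|x i - x j| <= rho) ->
  `|\sum_i c i *: x i| <= rho / 2 * \sum_i `|c i|.
Proof.
move=> c0 xr.
pose cp i := (`|c i| + c i) / 2.
pose cm i := (`|c i| - c i) / 2.
have cp0 i : 0 <= cp i by rewrite /cp divr_ge0 // -lerBlDr sub0r -normrN ler_norm.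
have cm0 i : 0 <= cm i by rewrite /cm divr_ge0 // subr_ge0 ler_norm.
set X := \sum_i `|c i|.
have sp : \sum_i cp i = X / 2 by rewrite /cp -mulr_suml big_split /= c0 addr0.
have sm : \sum_i cm i = X / 2 by rewrite /cm -mulr_suml sumrB c0 subr0.
have [X0|Xn0] := eqVneq X 0.
  have ci i : c i = 0.
    have h := @psumr_eq0P _ _ xpredT (fun i => `|c i|) (fun i _ => normr_ge0 (c i)) X0.
    by apply/normr0_eq0; apply: h.
  rewrite big1 ?normr0 ?X0 ?mulr0 // => i _; by rewrite ci scale0r.
have Xp : 0 < X by rewrite lt_neqAle eq_sym Xn0 sumr_ge0.
have key : X / 2 *: \sum_i c i *: x i = \sum_i \sum_j (cp i * cm j) *: (x i - x j).
  have e1 : \sum_i \sum_j (cp i * cm j) *: (x i - x j) =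
     (\sum_j cm j) *: \sum_i cp i *: x i - (\sum_i cp i) *: \sum_j cm j *: x j.
    have A : \sum_i \sum_j (cp i * cm j) *: x i = (\sum_j cm j) *: \sum_i cp i *: x i.
      rewrite scaler_sumr; apply: eq_bigr => i _.
      by rewrite -scaler_suml -mulr_sumr scalerA mulrC.
    have B : \sum_i \sum_j (cp i * cm j) *: x j = (\sum_i cp i) *: \sum_j cm j *: x j.
      rewrite exchange_big scaler_sumr; apply: eq_bigr => j _.
      by rewrite -scaler_suml -mulr_suml scalerA mulrC.
    rewrite -A -B -sumrB; apply: eq_bigr => i _; rewrite -sumrB; apply: eq_bigr => j _.
    by rewrite scalerBr.
  rewrite e1 sp sm -scalerBr -sumrB; congr (_ *: _); apply: eq_bigr => i _.
  by rewrite -scalerBl /cp /cm; congr (_ *: _); field.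
have : `|X / 2 *: \sum_i c i *: x i| <= X / 2 * (rho / 2 * X).
  rewrite key (le_trans (ler_norm_sum _ _ _)) //.
  apply: (@le_trans _ _ (\sum_i \sum_j (cp i * cm j) * rho)).
    apply: ler_sum => i _; apply: (le_trans (ler_norm_sum _ _ _)); apply: ler_sum => j _.
    rewrite normrZ ger0_norm; last exact: mulr_ge0.
    rewrite ler_wpM2l // mulr_ge0 //.
  have -> : X / 2 * (rho / 2 * X) = (\sum_i cp i) * (\sum_j cm j) * rho by rewrite sp sm; field.
  rewrite mulr_suml mulr_suml; apply: ler_sum => i _; rewrite mulr_sumr mulr_suml; apply: ler_sum => j _.
  by [].
have hX2 : 0 < X / 2 by rewrite divr_gt0.
rewrite normrZ ger0_norm; last exact: ltW.
by rewrite ler_pM2l.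
Qed.

Local Open Scope ring_scope.
Section Inner.
Context {R : realType} {H : completeNormedModType R} (inner : H -> H -> R).
Hypothesis ip : is_inner_product inner.

Lemma innerD x y z : inner (x + y) z = inner x z + inner y z.
Proof. by case: ip => _ lin _; rewrite -[x in LHS]scale1r lin mul1r. Qed.

Lemma inner0l z : inner 0 z = 0.
Proof. have := innerD 0 0 z; rewrite addr0 => h; lra. Qed.

Lemma innerZ a x z : inner (a *: x) z = a * inner x z.
Proof. by case: ip => _ lin _; rewrite -[a *: x]addr0 lin inner0l addr0. Qed.

Lemma innerN x z : inner (- x) z = - inner x z.
Proof. by rewrite -scaleN1r innerZ mulN1r. Qed.

Lemma innerB x y z : inner (x - y) z = inner x z - inner y z.
Proof. by rewrite innerD innerN. Qed.

Lemma innerC x y : inner x y = inner y x.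
Proof. by case: ip. Qed.

Lemma innerBr x y z : inner z (x - y) = inner z x - inner z y.
Proof. by rewrite innerC innerB !(innerC z). Qed.

Lemma innerZr a x z : inner z (a *: x) = a * inner z x.
Proof. by rewrite innerC innerZ innerC. Qed.

Lemma innerxx x : inner x x = `|x| ^+ 2.
Proof. by case: ip. Qed.

Lemma inner_le a b : inner a b <= `|a| * `|b|.
Proof.
set al := `|a|; set be := `|b|.
have [a0|an0] := eqVneq a 0; first by rewrite a0 inner0l; apply: mulr_ge0; apply: normr_ge0.
have [b0|bn0] := eqVneq b 0; first by rewrite b0 innerC inner0l; apply: mulr_ge0; apply: normr_ge0.
have alp : 0 < al by rewrite normr_gt0.
have bep : 0 < be by rewrite normr_gt0.
have h : 0 <= inner (be *: a - al *: b) (be *: a - al *: b) by rewrite innerxx sqr_ge0.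
rewrite !innerB !innerBr !innerZ !innerZr !innerxx (innerC b a) in h. fold al be in h.
have h2 : al * be * inner a b <= al * be * (al * be) by nra.
by rewrite ler_pM2l ?mulr_gt0 in h2.
Qed.
End Inner.

Lemma ones_pos {R : realType} (n : nat) (th : R) (u l : 'I_n.+1 -> R) :
  (forall i, 0 < u i) -> forall i, 0 < ones_update th u l i.
Proof.
move=> u0 i; rewrite /ones_update divr_gt0 ?mulr_gt0 ?expR_gt0 //.
by rewrite (bigD1 i) //= ltr_wpDr ?mulr_gt0 ?expR_gt0 // sumr_ge0 // => j _; rewrite mulr_ge0 ?expR_ge0 ?ltW.
Qed.

Lemma Z_pos {R : realType} (n : nat) (th : R) (u l : 'I_n.+1 -> R) :
  (forall i, 0 < u i) -> 0 < \sum_j u j * expR (- (th * l j)).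
Proof.
move=> u0; rewrite (bigD1 ord0) //= ltr_wpDr ?mulr_gt0 ?expR_gt0 //.
by rewrite sumr_ge0 // => j _; rewrite mulr_ge0 ?expR_ge0 ?ltW.
Qed.

Lemma ones_sum {R : realType} (n : nat) (th : R) (u l : 'I_n.+1 -> R) :
  (forall i, 0 < u i) -> \sum_i ones_update th u l i = 1.
Proof.
move=> u0; rewrite /ones_update -mulr_suml divff //; apply: lt0r_neq0; exact: Z_pos.
Qed.

Lemma ln_div {R : realType} (a b : R) : 0 < a -> 0 < b -> ln (a / b) = ln a - ln b.
Proof. by move=> a0 b0; rewrite lnM ?posrE ?invr_gt0 // lnV ?posrE. Qed.

Lemma gibbs {R : realType} (n : nat) (u q : 'I_n.+1 -> R) :
  (forall i, 0 <= u i) -> \sum_i u i = 1 -> (forall i, 0 < q i) -> \sum_i q i = 1 ->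
  0 <= \sum_i u i * ln (u i / q i).
Proof.
move=> u0 u1 q0 q1.
apply: (@le_trans _ _ (\sum_i (u i - q i))); first by rewrite sumrB u1 q1 subrr.
apply: ler_sum => i _.
have [->|un0] := eqVneq (u i) 0; first by rewrite mul0r sub0r oppr_le0 ltW.
have up : 0 < u i by rewrite lt_neqAle eq_sym un0 u0.
have h := @le_ln1Dx _ (q i / u i - 1).
rewrite (_ : 1 + (q i / u i - 1) = q i / u i) in h; last by ring.
have qu0 : 0 < q i / u i by rewrite divr_gt0.
have {}h := h ltac:(lra).
rewrite ln_div // in h.
rewrite ln_div //.
have : u i * (ln (q i) - ln (u i)) <= u i * (q i / u i - 1) by rewrite ler_wpM2l // ltW.
have -> : u i * (q i / u i - 1) = q i - u i by field; exact: lt0r_neq0.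
lra.
Qed.

Lemma round_bound {R : realType} (n : nat) (q ell m u : 'I_n.+1 -> R) (th r : R) :
  (forall i, 0 < q i) -> \sum_i q i = 1 ->
  (forall i, 0 <= u i) -> \sum_i u i = 1 -> 0 < th ->
  (forall i j, (ell i - m i) - (ell j - m j) <= r) ->
  th * (\sum_i ell i * (ones_update th q m i - u i)) <=
    \sum_i u i * ln (u i / q i) - \sum_i u i * ln (u i / ones_update th q ell i)
    + th ^+ 2 * r ^+ 2 / 2 - (\sum_i `|ones_update th q m i - q i|) ^+ 2 / 4.
Proof.
move=> q0 q1 u0 u1 th0 dr.
set p := ones_update th q m.
set q' := ones_update th q ell.
set Zm := \sum_j q j * expR (- (th * m j)).
set Zl := \sum_j q j * expR (- (th * ell j)).
have Zm0 : 0 < Zm by apply: Z_pos.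
have Zl0 : 0 < Zl by apply: Z_pos.
have p0 i : 0 < p i by apply: ones_pos.
have q'0 i : 0 < q' i by apply: ones_pos.
have p1 : \sum_i p i = 1 by apply: ones_sum.
have kld : \sum_i u i * ln (u i / q i) - \sum_i u i * ln (u i / q' i)
           = - (th * \sum_i ell i * u i) - ln Zl.
  rewrite -sumrB.
  rewrite (eq_bigr (fun i => u i * (- (th * ell i) - ln Zl))); last first.
    move=> i _; have [->|un0] := eqVneq (u i) 0; first by rewrite !mul0r subrr.
    have up : 0 < u i by rewrite lt_neqAle eq_sym un0 u0.
    rewrite -mulrBr (@ln_div _ _ _ up (q0 i)) (@ln_div _ _ _ up (q'0 i)); congr (_ * _).
    have e0 : 0 < expR (- (th * ell i)) := expR_gt0 _.
    rewrite /q' /ones_update -/Zl (@ln_div _ _ _ _ Zl0) ?mulr_gt0 // lnM ?posrE // expRK.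
    ring.
  rewrite (eq_bigr (fun i => - (th * (ell i * u i)) - u i * ln Zl)); last by move=> i _; ring.
  by rewrite sumrB -mulr_suml u1 mul1r sumrN mulr_sumr.
have klp : \sum_i p i * ln (q i / p i) = ln Zm + th * \sum_i m i * p i.
  rewrite (eq_bigr (fun i => p i * (ln Zm + th * m i))); last first.
    move=> i _; congr (_ * _).
    have e0 : 0 < expR (- (th * m i)) := expR_gt0 _.
    rewrite /p /ones_update -/Zm (@ln_div _ _ _ (q0 i)); last by rewrite divr_gt0 ?mulr_gt0.
    rewrite ln_div ?mulr_gt0 // lnM ?posrE // expRK.
    ring.
  rewrite (eq_bigr (fun i => p i * ln Zm + th * (m i * p i))); last by move=> i _; ring.
  by rewrite big_split /= -mulr_suml p1 mul1r mulr_sumr.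
pose d i := ell i - m i.
have eZ : Zl = Zm * \sum_i p i * expR (- (th * d i)).
  rewrite mulr_sumr; apply: eq_bigr => i _.
  rewrite /p /ones_update /d mulrA mulrCA mulfV ?mulr1; last exact: lt0r_neq0.
  rewrite -mulrA -expRD; congr (_ * expR _); ring.
have S0 : 0 < \sum_i p i * expR (- (th * d i)).
  by rewrite -(pmulr_rgt0 _ Zm0) -eZ.
have ps := @psi_bound _ _ p d th r (fun i => ltW (p0 i)) p1 (ltW th0) dr.
have kb := @kl_bound _ _ p q p0 q0 p1 q1.
rewrite kld.
have e1 : th * (\sum_i ell i * (p i - u i)) = th * \sum_i ell i * p i - th * \sum_i ell i * u i.
  by rewrite -mulrBr -sumrB; congr (_ * _); apply: eq_bigr => i _; ring.
have e2 : th * \sum_i ell i * p i = th * \sum_i d i * p i + th * \sum_i m i * p i.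
  by rewrite -mulrDr -big_split; congr (_ * _); apply: eq_bigr => i _; rewrite /d /=; ring.
rewrite eZ lnM ?posrE // in ps *.
lra.
Qed.
Lemma arith_D2 {R : realType} (D Gn E : R) : 0 <= D -> 0 <= Gn -> 0 <= E -> D <= Gn + E ->
  D ^+ 2 <= 2 * Gn ^+ 2 + 2 * E ^+ 2.
Proof.
move=> D0 G0 E0 h.
have h2 : D ^+ 2 <= (Gn + E) ^+ 2 by rewrite lerXn2r // ?nnegrE // addr_ge0.
apply: (le_trans h2); rewrite -subr_ge0.
have -> : 2 * Gn ^+ 2 + 2 * E ^+ 2 - (Gn + E) ^+ 2 = (Gn - E) ^+ 2 by ring.
exact: sqr_ge0.
Qed.

Lemma arith_cond {R : realType} (rho L th : R) : 0 <= rho -> 0 < L -> 0 < th ->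
  ~~ (1 / (Num.sqrt 2 * rho ^+ 2 * L) < th) -> th ^+ 2 * rho ^+ 2 * (L ^+ 2 * rho ^+ 2) <= 1.
Proof.
move=> rho0 L0 th0 hc.
have [rz|rnz] := eqVneq rho 0.
  by rewrite rz expr0n /= mulr0 mul0r ler01.
have kp : 0 < Num.sqrt 2 * rho ^+ 2 * L.
  have rp : 0 < rho by rewrite lt_neqAle eq_sym rnz rho0.
  apply: mulr_gt0 => //; apply: mulr_gt0; [by rewrite sqrtr_gt0 | exact: exprn_gt0].
move: hc; rewrite -leNgt ler_pdivlMr // => hc.
have s2 : 1 <= Num.sqrt 2 :> R.
  by rewrite -[X in X <= _]sqrtr1 ler_wsqrtr // ler1n.
have r20 : 0 <= rho ^+ 2 by apply: sqr_ge0.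
have hk0 : 0 <= th * (rho ^+ 2 * L) by rewrite !mulr_ge0 // ltW.
have hk : th * (rho ^+ 2 * L) <= 1.
  have h1 : th * (rho ^+ 2 * L) * 1 <= th * (rho ^+ 2 * L) * Num.sqrt 2 by rewrite ler_wpM2l.
  have e : th * (Num.sqrt 2 * rho ^+ 2 * L) = th * (rho ^+ 2 * L) * Num.sqrt 2 by ring.
  rewrite e in hc; rewrite mulr1 in h1; exact: le_trans h1 hc.
have : (th * (rho ^+ 2 * L)) ^+ 2 <= 1.
  by rewrite -(expr1n _ 2) lerXn2r // ?nnegrE.
by rewrite !exprMn; congr (_ <= _); ring.
Qed.

Lemma arith_key {R : realType} (th rho L D Gn X ind : R) :
  0 <= rho -> 0 <= X -> 0 <= th ->
  D ^+ 2 <= 2 * Gn ^+ 2 + 2 * (L * (rho / 2 * X)) ^+ 2 ->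
  (ind = 1 \/ (ind = 0 /\ th ^+ 2 * rho ^+ 2 * (L ^+ 2 * rho ^+ 2) <= 1)) ->
  th ^+ 2 * (rho * D) ^+ 2 / 2 - X ^+ 2 / 4 <=
  th ^+ 2 * (rho ^+ 2 * (Gn ^+ 2 + ind * rho ^+ 2 * L ^+ 2 * X ^+ 2)).
Proof.
move=> rho0 X0 th0 hD hind.
set a := th ^+ 2 * rho ^+ 2.
have a0 : 0 <= a by rewrite mulr_ge0 // sqr_ge0.
have e1 : th ^+ 2 * (rho * D) ^+ 2 / 2 = a * D ^+ 2 / 2 by rewrite /a exprMn; ring.
have e2 : th ^+ 2 * (rho ^+ 2 * (Gn ^+ 2 + ind * rho ^+ 2 * L ^+ 2 * X ^+ 2))
   = a * Gn ^+ 2 + ind * (a * (L ^+ 2 * rho ^+ 2)) * X ^+ 2 by rewrite /a; ring.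
have e3 : 2 * (L * (rho / 2 * X)) ^+ 2 = (L ^+ 2 * rho ^+ 2) * X ^+ 2 / 2 by rewrite !exprMn; field.
rewrite e1 e2; rewrite e3 in hD.
have hD' : a * D ^+ 2 <= a * (2 * Gn ^+ 2 + L ^+ 2 * rho ^+ 2 * X ^+ 2 / 2) by rewrite ler_wpM2l.
set b := a * (L ^+ 2 * rho ^+ 2).
have b0 : 0 <= b by rewrite /b mulr_ge0 // mulr_ge0 // sqr_ge0.
have ab : a * (2 * Gn ^+ 2 + L ^+ 2 * rho ^+ 2 * X ^+ 2 / 2) = 2 * (a * Gn ^+ 2) + b * X ^+ 2 / 2 by rewrite /b; ring.
rewrite ab in hD'.
have x2 : 0 <= X ^+ 2 by apply: sqr_ge0.
set X2 := X ^+ 2 in x2 hD' *.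
set aG := a * Gn ^+ 2 in hD' *.
set aD := a * D ^+ 2 in hD' *.
case: hind => [-> | [-> hb]].
  have : 0 <= b * X2 by rewrite mulr_ge0.
  rewrite mul1r; lra.
have : b * X2 <= X2 by rewrite -[X in _ <= X]mul1r ler_wpM2r.
rewrite mul0r mul0r addr0; lra.
Qed.
Lemma dr_lemma {R : realType} {H : completeNormedModType R} (inner : H -> H -> R)
  (ip : is_inner_product inner) (g gh a b : H) (rho : R) :
  `|a - b| <= rho ->
  (inner g a - inner gh a) - (inner g b - inner gh b) <= rho * `|g - gh|.
Proof.
move=> hab.
have -> : (inner g a - inner gh a) - (inner g b - inner gh b) = inner (g - gh) (a - b).
  by rewrite (innerBr inner ip) !(innerB inner ip); ring.
apply: (le_trans (inner_le inner ip _ _)).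
rewrite mulrC; apply: ler_wpM2r => //.
Qed.

Lemma round_full {R : realType} {H : completeNormedModType R} (inner : H -> H -> R)
  (ip : is_inner_product inner) (C : set H) (rho L theta : R) (n : nat)
  (xs : 'I_n.+1 -> H) (g gh gs0 : H) (q u : 'I_n.+1 -> R) :
  (forall i, C (xs i)) -> (forall a b, C a -> C b -> `|a - b| <= rho) -> 0 <= rho ->
  0 < L -> 0 < theta ->
  (forall i, 0 < q i) -> \sum_i q i = 1 -> (forall i, 0 <= u i) -> \sum_i u i = 1 ->
  `|gs0 - gh| <= L * `|\sum_i ones_update theta q (fun i => inner gh (xs i)) i *: xs i
                       - \sum_i q i *: xs i| ->
  theta * (\sum_i inner g (xs i) * (ones_update theta q (fun i => inner gh (xs i)) i - u i))
  <= \sum_i u i * ln (u i / q i)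
     - \sum_i u i * ln (u i / ones_update theta q (fun i => inner g (xs i)) i)
     + theta ^+ 2 * (rho ^+ 2 * (`|g - gs0| ^+ 2
        + ((1 / (Num.sqrt 2 * rho ^+ 2 * L) < theta)%R%:R : R) * rho ^+ 2 * L ^+ 2
          * (\sum_i `|ones_update theta q (fun i => inner gh (xs i)) i - q i|) ^+ 2)).
Proof.
move=> xsC diam rho0 L0 th0 qp q1 u0 u1 lip.
set p := ones_update theta q (fun i => inner gh (xs i)).
set D := `|g - gh|.
have dr : forall i j, (inner g (xs i) - inner gh (xs i))
     - (inner g (xs j) - inner gh (xs j)) <= rho * D.
  by move=> i j; apply: dr_lemma => //; apply: diam.
have rb := @round_bound _ _ q (fun i => inner g (xs i)) (fun i => inner gh (xs i)) u theta (rho * D) qp q1 u0 u1 th0 dr.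
set Xt := \sum_i `|p i - q i| in rb *.
have X0 : 0 <= Xt by apply: sumr_ge0 => i _.
have p0 i : 0 < p i by apply: ones_pos.
have p1 : \sum_i p i = 1 by apply: ones_sum.
have E2 : `|\sum_i p i *: xs i - \sum_i q i *: xs i| <= rho / 2 * Xt.
  have -> : \sum_i p i *: xs i - \sum_i q i *: xs i = \sum_i (p i - q i) *: xs i.
    by rewrite -sumrB; apply: eq_bigr => i _; rewrite scalerBl.
  apply: norm_comb0; first by rewrite sumrB p1 q1 subrr.
  by move=> i j; apply: diam.
have Dle : D <= `|g - gs0| + L * (rho / 2 * Xt).
  apply: (le_trans (ler_distD gs0 _ _)); rewrite lerD2l.
  apply: (le_trans lip); rewrite ler_wpM2l //; exact: ltW.
set Gn := `|g - gs0|.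
have Gn0 : 0 <= Gn by apply: normr_ge0.
have D0 : 0 <= D by apply: normr_ge0.
have h0 : 0 <= L * (rho / 2 * Xt).
  apply: mulr_ge0; first exact: ltW.
  by apply: mulr_ge0 => //; apply: divr_ge0.
have D2 := @arith_D2 _ D Gn _ D0 Gn0 h0 Dle.
set ind := ((1 / (Num.sqrt 2 * rho ^+ 2 * L) < theta)%R%:R : R).
have hind : ind = 1 \/ (ind = 0 /\ theta ^+ 2 * rho ^+ 2 * (L ^+ 2 * rho ^+ 2) <= 1).
  have [hc|hc] := boolP (1 / (Num.sqrt 2 * rho ^+ 2 * L) < theta).
    by left; rewrite /ind hc.
  right; rewrite /ind (negbTE hc); split => //.
  exact: (@arith_cond _ rho L theta).
have key := @arith_key _ theta rho L D Gn Xt ind rho0 X0 (ltW th0) D2 hind.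
move: rb key.
set K1 := \sum_i u i * ln (u i / q i).
set K2 := \sum_i u i * ln (u i / _).
set Lh := theta * _.
set Q := theta ^+ 2 * (rho ^+ 2 * _).
set P := theta ^+ 2 * (rho * D) ^+ 2 / 2.
move=> rb key.
lra.
Qed.

Theorem corollary4 (R : realType) (H : completeNormedModType R)
  (inner : H -> H -> R) (C : set H) (rho L theta : R) (n : nat)
  (phi phih : nat -> H -> \bar R)
  (x : nat -> 'I_n.+1 -> H) (g gh : nat -> H)
  (w wt : nat -> 'I_n.+1 -> R) :
  is_inner_product inner ->
  C !=set0 -> closed C -> convex_set C ->
  has_ubound [set `|a - b| | a in C & b in C] ->
  rho = sup [set `|a - b| | a in C & b in C] ->
  (forall a, C a -> `|a| <= rho) ->
  (forall t, convex_fun (phi t)) ->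
  (forall t a, C a -> exists g0, subgrad inner (phi t) a g0) ->
  0 < L -> 0 < theta ->
  (forall t, convex_fun (phih t)) ->
  (forall t a, C a -> exists g0, subgrad inner (phih t) a g0) ->
  (forall t a b ga gb, C a -> C b -> subgrad inner (phih t) a ga ->
     subgrad inner (phih t) b gb -> `|ga - gb| <= L * `|a - b|) ->
  (forall t i, (1 <= t)%N -> C (x t i)) ->
  simplex (wt 1%N) -> (forall i, 0 < wt 1%N i) ->
  (forall t, (1 <= t)%N ->
     subgrad inner (phih t) (\sum_i wt t i *: x t i) (gh t)) ->
  (forall t, (1 <= t)%N ->
     w t = ones_update theta (wt t) (fun i => inner (gh t) (x t i))) ->
  (forall t, (1 <= t)%N ->
     subgrad inner (phi t) (\sum_i w t i *: x t i) (g t)) ->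
  (forall t, (1 <= t)%N ->
     wt t.+1 = ones_update theta (wt t) (fun i => inner (g t) (x t i))) ->
  forall (T : nat) (u : 'I_n.+1 -> R), (1 <= T)%N -> simplex u ->
  ((\sum_(1 <= t < T.+1) \sum_i inner (g t) (x t i) * (w t i - u i))%:E
   <= (theta^-1 * \sum_i u i * ln (u i / wt 1%N i))%:E
      + (theta * rho ^+ 2)%:E *
        \sum_(1 <= t < T.+1)
          (subgrad_gap inner C (phi t) (phih t)
           + (((1 / (Num.sqrt 2 * rho ^+ 2 * L) < theta)%R%:R : R)
              * rho ^+ 2 * L ^+ 2 * (\sum_i `|w t i - wt t i|) ^+ 2)%:E))%E.
Proof.
move=> ip Cne Ccl Ccv Cub rhoE Cnorm phic phisub L0 th0 phihc phihsub lip xC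
  wt1s wt1p ghs wE gs wtE T u T1 us.
case: us => u0 u1.
have pos : forall t, (1 <= t)%N -> (forall i, 0 < wt t i) /\ \sum_i wt t i = 1.
  elim => [//|t IH] _.
  case: t IH => [_|t IH]; first by split => //; case: wt1s.
  have [p1 s1] := IH isT.
  rewrite wtE //; split; [exact: ones_pos | exact: ones_sum].
have hs : has_sup [set `|a - b| | a in C & b in C].
  split => //; case: Cne => a Ca; exists `|a - a|; exists a => //; by exists a.
have diam : forall a b, C a -> C b -> `|a - b| <= rho.
  move=> a1 b1 Ca Cb; rewrite rhoE; apply: sup_upper_bound => //; exists a1 => //; by exists b1.
have rho0 : 0 <= rho.
  case: Cne => a Ca; apply: le_trans (Cnorm a Ca); exact: normr_ge0.
pose xbar t := \sum_i w t i *: x t i.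
pose xtil t := \sum_i wt t i *: x t i.
have xbarC : forall t, (1 <= t)%N -> C (xbar t).
  move=> t ht; have [p1 s1] := pos t ht.
  rewrite /xbar (wE t ht); apply: conv_comb => //.
  - by move=> i; apply: ltW; apply: ones_pos.
  - exact: ones_sum.
  - by move=> i; apply: xC.
have xtilC : forall t, (1 <= t)%N -> C (xtil t).
  move=> t ht; have [p1 s1] := pos t ht.
  apply: conv_comb => //.
  - by move=> i; apply: ltW.
  - by move=> i; apply: xC.
have exg : forall t, exists gs0, (1 <= t)%N -> subgrad inner (phih t) (xbar t) gs0.
  move=> t; case: (boolP (1 <= t)%N) => ht.
    by have [g0 hg0] := phihsub t _ (xbarC t ht); exists g0.
  by exists 0.
have [gsf gsfP] := choice exg.
pose ind := ((1 / (Num.sqrt 2 * rho ^+ 2 * L) < theta)%R%:R : R).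
pose X t := \sum_i `|w t i - wt t i|.
pose G t := `|g t - gsf t| ^+ 2.
pose B t := G t + ind * rho ^+ 2 * L ^+ 2 * X t ^+ 2.
pose KL t := \sum_i u i * ln (u i / wt t i).
pose A t := \sum_i inner (g t) (x t i) * (w t i - u i).
have round : forall t, (1 <= t)%N ->
    theta * A t <= KL t - KL t.+1 + theta ^+ 2 * (rho ^+ 2 * B t).
  move=> t ht.
  have [qp q1] := pos t ht.
  have hgs := gsfP t ht.
  have lipt := lip t (xbar t) (xtil t) (gsf t) (gh t) (xbarC t ht) (xtilC t ht) hgs (ghs t ht).
  rewrite /xbar /xtil (wE t ht) in lipt.
  have := @round_full R H inner ip C rho L theta n (x t) (g t) (gh t) (gsf t) (wt t) u
     (fun i => xC t i ht) diam rho0 L0 th0 qp q1 u0 u1 lipt.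
  rewrite -(wE t ht) -(wtE t ht).
  by rewrite /A /KL /B /G /X /ind.
have tel : \sum_(1 <= t < T.+1) (KL t - KL t.+1) = KL 1%N - KL T.+1.
  rewrite (eq_bigr (fun t => - (KL t.+1 - KL t))); last by move=> t _; rewrite opprB.
  by rewrite sumrN telescope_sumr // opprB.
have sumb : theta * \sum_(1 <= t < T.+1) A t
    <= KL 1%N - KL T.+1 + theta ^+ 2 * (rho ^+ 2 * \sum_(1 <= t < T.+1) B t).
  rewrite -tel mulr_sumr !mulr_sumr -big_split; apply: ler_sum_nat => t /andP[ht _].
  exact: round.
have KL0 : 0 <= KL T.+1.
  have [p1 s1] := pos T.+1 isT.
  exact: gibbs.
have B0 : 0 <= \sum_(1 <= t < T.+1) B t.
  apply: sumr_ge0 => t _; rewrite /B /G; apply: addr_ge0; first exact: sqr_ge0.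
  apply: mulr_ge0; last exact: sqr_ge0.
  apply: mulr_ge0; last exact: sqr_ge0.
  by apply: mulr_ge0; [rewrite /ind ler0n | exact: sqr_ge0].
have real : \sum_(1 <= t < T.+1) A t
    <= theta^-1 * KL 1%N + theta * rho ^+ 2 * \sum_(1 <= t < T.+1) B t.
  rewrite -(ler_pM2l th0).
  have -> : theta * (theta^-1 * KL 1%N + theta * rho ^+ 2 * \sum_(1 <= t < T.+1) B t)
     = KL 1%N + theta ^+ 2 * (rho ^+ 2 * \sum_(1 <= t < T.+1) B t).
    by field; exact: lt0r_neq0.
  apply: (le_trans sumb); rewrite lerD2r lerBlDr lerDl //.
apply: (@le_trans _ _ ((theta^-1 * KL 1%N)%:E + (theta * rho ^+ 2)%:E * (\sum_(1 <= t < T.+1) B t)%:E)%E).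
  by rewrite -EFinM -EFinD lee_fin.
apply: leeD2l; apply: lee_wpmul2l.
  by rewrite lee_fin mulr_ge0 // ?sqr_ge0 // ltW.
rewrite -sumEFin [in leLHS]big_nat_cond [in leRHS]big_nat_cond; apply: lee_sum => t /andP[/andP[ht _] _].
rewrite /B EFinD; apply: leeD2r.
apply: ereal_sup_ubound; exists (xbar t), (g t), (gsf t); split => //.
- exact: xbarC.
- exact: gs.
- exact: gsfP.
Qed.
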